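(* For any optiongraphs $\mathsf{C}$ and $\mathsf{D}$, $(\mathsf{C}+\mathsf{D})/{\bowtie_{\mathsf{C}+\mathsf{D}}}\cong(\mathsf{C}/{\bowtie_\mathsf{C}}+\mathsf{D}/{\bowtie_\mathsf{D}})/{\bowtie_{\mathsf{E}}}$, where $\mathsf{E}:=\mathsf{C}/{\bowtie_\mathsf{C}}+\mathsf{D}/{\bowtie_\mathsf{D}}$.
   Context: An optiongraph is a nonempty set $\mathsf{D}$ of positions with an option function $\mathrm{Opt}_\mathsf{D}:\mathsf{D}\to 2^{\mathsf{D}}$. A map is option preserving if $\mathrm{Opt}_\mathsf{D}(f(p))=f(\mathrm{Opt}_\mathsf{C}(p))$; an isomorphism ($\cong$) is a bijective option-preserving map. For an equivalence relation $\theta$, $[p]_\theta$ is the class of $p$ and $[S]_\theta:=\{[s]_\theta\mid s\in S\}$; $\theta$ is a congruence relation if $p\mathrel{\theta}q$ implies $[\mathrm{Opt}(p)]_\theta=[\mathrm{Opt}(q)]_\theta$. The quotient $\mathsf{D}/\theta$ has positions the $\theta$-classes and $\mathrm{Opt}([p]_\theta):=[\mathrm{Opt}_\mathsf{D}(p)]_\theta$. For an optiongraph $\mathsf{X}$, $\bowtie_\mathsf{X}$ is the union of all congruence relations on $\mathsf{X}$ (the maximum congruence). The sum $\mathsf{C}+\mathsf{D}$ is the optiongraph on $\mathsf{C}\times\mathsf{D}$ with $\mathrm{Opt}_{\mathsf{C}+\mathsf{D}}(p,q):=(\mathrm{Opt}_\mathsf{C}(p)\times\{q\})\cup(\{p\}\times\mathrm{Opt}_\mathsf{D}(q))$.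 *)

(* Defs.v *)
(* An optiongraph: a nonempty type of positions with an option relation;
   [opt p q] means q \in Opt(p). *)
Record optiongraph := OG {
  pos : Type;
  pos_inh : pos;
  opt : pos -> pos -> Prop
}.

Arguments opt {o} _ _.

Definition bijective_map {A B : Type} (f : A -> B) : Prop :=
  (forall x y, f x = f y -> x = y) /\ (forall y, exists x, f x = y).

Definition option_preserving (C D : optiongraph) (f : pos C -> pos D) : Prop :=
  forall p y, opt (f p) y <-> exists x, opt p x /\ f x = y.

Definition isomorphic (C D : optiongraph) : Prop :=
  exists f : pos C -> pos D, bijective_map f /\ option_preserving C D f.

Definition equivalence_rel {T : Type} (th : T -> T -> Prop) : Prop :=
  (forall x, th x x) /\ (forall x y, th x y -> th y x) /\
  (forall x y z, th x y -> th y z -> th x z).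

Definition cls {T : Type} (th : T -> T -> Prop) (p : T) : T -> Prop := th p.

Definition img_cls {T : Type} (th : T -> T -> Prop) (S : T -> Prop)
  : (T -> Prop) -> Prop := fun A => exists s, S s /\ A = cls th s.

Definition congruence (X : optiongraph) (th : pos X -> pos X -> Prop) : Prop :=
  equivalence_rel th /\
  forall p q, th p q ->
    forall A, img_cls th (opt p) A <-> img_cls th (opt q) A.

Definition bowtie (X : optiongraph) : pos X -> pos X -> Prop :=
  fun p q => exists th, congruence X th /\ th p q.

Definition qpos (X : optiongraph) (th : pos X -> pos X -> Prop) : Type :=
  { A : pos X -> Prop | exists p, A = cls th p }.

(* Opt([p]) := [Opt(p)]; stated as the union over representatives p of the
   class, which coincides with [Opt(p)] for any p when theta is a congruence. *)
Definition qopt (X : optiongraph) (th : pos X -> pos X -> Prop)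
  (A B : qpos X th) : Prop :=
  exists p, proj1_sig A p /\ exists q, opt p q /\ proj1_sig B = cls th q.

Definition quotient (X : optiongraph) (th : pos X -> pos X -> Prop) : optiongraph :=
  OG (qpos X th)
     (exist _ (cls th (pos_inh X)) (ex_intro _ (pos_inh X) eq_refl))
     (qopt X th).

Definition sum_opt (C D : optiongraph) (x y : pos C * pos D) : Prop :=
  (opt (fst x) (fst y) /\ snd y = snd x) \/
  (fst y = fst x /\ opt (snd x) (snd y)).

Definition ogsum (C D : optiongraph) : optiongraph :=
  OG (pos C * pos D)%type (pos_inh C, pos_inh D) (sum_opt C D).

(* Main.v *)
Require Import Defs.
From Stdlib Require Import FunctionalExtensionality PropExtensionality ProofIrrelevance ClassicalEpsilon.

Definition bisim (X : optiongraph) (R : pos X -> pos X -> Prop) : Prop :=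
  forall p q, R p q ->
   (forall x, opt p x -> exists y, opt q y /\ R x y) /\
   (forall y, opt q y -> exists x, opt p x /\ R x y).

Definition bis (X : optiongraph) (p q : pos X) := exists R, bisim X R /\ R p q.

Lemma bis_refl X p : bis X p p.
Proof. exists (@eq (pos X)). split; [|reflexivity]. intros a b <-; split; intros z Hz; exists z; auto. Qed.

Lemma bis_sym X p q : bis X p q -> bis X q p.
Proof. intros [R [HR H]]. exists (fun a b => R b a). split; [|exact H].
 intros a b Hab. destruct (HR _ _ Hab) as [H1 H2]. split.
 - intros x Hx. destruct (H2 x Hx) as [y [Hy Ry]]. eauto.
 - intros y Hy. destruct (H1 y Hy) as [x [Hx Rx]]. eauto.
Qed.

Lemma bis_trans X p q r : bis X p q -> bis X q r -> bis X p r.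
Proof. intros [R1 [H1 P1]] [R2 [H2 P2]].
 exists (fun a c => exists b, R1 a b /\ R2 b c). split; [|eauto].
 intros a c [b [Hab Hbc]]. destruct (H1 _ _ Hab) as [A1 A2]. destruct (H2 _ _ Hbc) as [B1 B2]. split.
 - intros x Hx. destruct (A1 x Hx) as [y [Hy Rxy]]. destruct (B1 y Hy) as [z [Hz Ryz]]. eauto.
 - intros z Hz. destruct (B2 z Hz) as [y [Hy Ryz]]. destruct (A2 y Hy) as [x [Hx Rxy]]. eauto.
Qed.

Lemma bis_bisim X : bisim X (bis X).
Proof. intros p q [R [HR H]]. destruct (HR _ _ H) as [H1 H2]. split.
 - intros x Hx. destruct (H1 x Hx) as [y [Hy R']]. exists y; split; [auto| exists R; auto].
 - intros y Hy. destruct (H2 y Hy) as [x [Hx R']]. exists x; split; [auto| exists R; auto].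
Qed.

Lemma bis_cls X p q : bis X p q -> cls (bis X) p = cls (bis X) q.
Proof. intros H. unfold cls. apply functional_extensionality; intro z.
 apply propositional_extensionality. split; intro.
 - eapply bis_trans; [apply bis_sym; exact H|]; auto.
 - eapply bis_trans; [exact H|]; auto.
Qed.

Lemma cls_bis X p q : cls (bis X) p = cls (bis X) q -> bis X p q.
Proof. intro E. assert (H: cls (bis X) q q) by apply bis_refl. rewrite <- E in H. exact H. Qed.

Lemma bowtie_bis X : bowtie X = bis X.
Proof.
 apply functional_extensionality; intro p. apply functional_extensionality; intro q.
 apply propositional_extensionality. split.
 - intros [th [[[Hr [Hs Ht]] Hc] H]]. exists th. split; auto.
   intros a b Hab. split.
   + intros x Hx. destruct (proj1 (Hc a b Hab (cls th x)) (ex_intro _ x (conj Hx eq_refl))) as [y [Hy E]].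
     exists y. split; auto. assert (H0 : cls th y y) by apply Hr. rewrite <- E in H0. exact H0.
   + intros y Hy. destruct (proj2 (Hc a b Hab (cls th y)) (ex_intro _ y (conj Hy eq_refl))) as [x [Hx E]].
     exists x; split; auto. assert (H0 : cls th y y) by apply Hr. rewrite E in H0. exact H0.
 - intro H. exists (bis X). split; auto. split.
   + split; [exact (bis_refl X)|split; [exact (bis_sym X)| exact (bis_trans X)]].
   + intros a b Hab A. split.
     * intros [x [Hx ->]]. destruct (proj1 (bis_bisim X a b Hab) x Hx) as [y [Hy Rxy]].
       exists y. split; auto. apply bis_cls; auto.
     * intros [y [Hy ->]]. destruct (proj2 (bis_bisim X a b Hab) y Hy) as [x [Hx Rxy]].
       exists x; split; auto. apply bis_cls. apply bis_sym; auto.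
Qed.

Lemma sig_eq {A} {P : A -> Prop} (u v : sig P) : proj1_sig u = proj1_sig v -> u = v.
Proof. destruct u, v; simpl; intros ->. f_equal; apply proof_irrelevance. Qed.

Definition mk X (p : pos X) : qpos X (bis X) := exist _ (cls (bis X) p) (ex_intro _ p eq_refl).

Lemma mk_eq X p q : mk X p = mk X q <-> bis X p q.
Proof. split.
 - intro E. apply cls_bis. exact (f_equal (@proj1_sig _ _) E).
 - intro H. apply sig_eq. simpl. apply bis_cls; auto.
Qed.

Lemma mk_surj X (A : qpos X (bis X)) : exists p, A = mk X p.
Proof. destruct A as [A [p ->]]. exists p. apply sig_eq. reflexivity. Qed.

Lemma qopt_mk X p q' : qopt X (bis X) (mk X p) (mk X q') <-> exists q, opt p q /\ bis X q q'.
Proof. unfold qopt; simpl. split.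
 - intros [p' [Hpp' [q [Hq E]]]].
   destruct (proj2 (bis_bisim X p p' Hpp') q Hq) as [x [Hx Rx]].
   exists x. split; auto. eapply bis_trans; [exact Rx|]. apply bis_sym. apply cls_bis. exact E.
 - intros [q [Hq H]]. exists p. split; [apply bis_refl|]. exists q. split; auto.
   apply bis_cls. apply bis_sym; auto.
Qed.

Lemma lemA X Y (f : pos X -> pos Y) : option_preserving X Y f ->
  forall p q, bis X p q <-> bis Y (f p) (f q).
Proof. intros Hf p q. split.
 - intro H. exists (fun u v => exists a b, f a = u /\ f b = v /\ bis X a b). split; [|eauto 6].
   intros u v [a [b [<- [<- Hab]]]]. destruct (bis_bisim X a b Hab) as [H1 H2]. split.
   + intros u' Hu'. apply Hf in Hu'. destruct Hu' as [x [Hx <-]]. destruct (H1 x Hx) as [y [Hy R]].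
     exists (f y). split; [apply Hf; eauto| eauto 6].
   + intros v' Hv'. apply Hf in Hv'. destruct Hv' as [y [Hy <-]]. destruct (H2 y Hy) as [x [Hx R]].
     exists (f x). split; [apply Hf; eauto| eauto 6].
 - intro H. exists (fun a b => bis Y (f a) (f b)). split; auto. intros a b Hab.
   destruct (bis_bisim Y _ _ Hab) as [H1 H2]. split.
   + intros x Hx. assert (H0 : opt (f a) (f x)) by (apply Hf; eauto).
     destruct (H1 _ H0) as [y' [Hy' R]]. apply Hf in Hy'. destruct Hy' as [y [Hy <-]]. eauto.
   + intros y Hy. assert (H0 : opt (f b) (f y)) by (apply Hf; eauto).
     destruct (H2 _ H0) as [x' [Hx' R]]. apply Hf in Hx'. destruct Hx' as [x [Hx <-]]. eauto.
Qed.

Lemma iso_quot X Y (f : pos X -> pos Y) : option_preserving X Y f -> (forall y, exists x, f x = y) ->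
  isomorphic (quotient X (bis X)) (quotient Y (bis Y)).
Proof. intros Hf Hs.
 pose (g := fun A : qpos X (bis X) =>
   mk Y (f (proj1_sig (constructive_indefinite_description _ (proj2_sig A))))).
 assert (Hg : forall p, g (mk X p) = mk Y (f p)).
 { intro p. unfold g. destruct (constructive_indefinite_description _ _) as [r Hr]. simpl.
   apply mk_eq. apply (lemA X Y f Hf). apply bis_sym. apply cls_bis. exact Hr. }
 exists g. split; [split|].
 - intros A B E. destruct (mk_surj X A) as [p ->], (mk_surj X B) as [q ->]. rewrite !Hg in E.
   apply mk_eq in E. apply mk_eq. apply (lemA X Y f Hf); auto.
 - intro B. destruct (mk_surj Y B) as [y ->]. destruct (Hs y) as [x <-]. exists (mk X x). apply Hg.
 - intros A B'. destruct (mk_surj X A) as [p ->]. destruct (mk_surj Y B') as [y ->].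
   cbn [opt quotient]. rewrite Hg. rewrite qopt_mk. split.
   + intros [y0 [Hy0 R]]. apply Hf in Hy0. destruct Hy0 as [x [Hx <-]]. exists (mk X x). split.
     * apply qopt_mk. exists x; split; auto; apply bis_refl.
     * rewrite Hg. apply mk_eq. auto.
   + intros [B [HB E]]. destruct (mk_surj X B) as [x' ->]. rewrite Hg in E. apply mk_eq in E.
     apply qopt_mk in HB. destruct HB as [x [Hx R]]. exists (f x). split.
     * apply Hf; eauto.
     * eapply bis_trans; [|exact E]. apply (lemA X Y f Hf); auto.
Qed.

Lemma pi X : option_preserving X (quotient X (bis X)) (mk X).
Proof. intros p Y'. destruct (mk_surj X Y') as [y ->]. cbn [opt quotient]. rewrite qopt_mk.
 split; intros [q [Hq R]]; exists q; split; auto; apply mk_eq; auto. Qed.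

Lemma prod_op C C' D D' (f : pos C -> pos C') (g : pos D -> pos D') :
  option_preserving C C' f -> option_preserving D D' g ->
  option_preserving (ogsum C D) (ogsum C' D') (fun x => (f (fst x), g (snd x))).
Proof. intros Hf Hg [c d] [y1 y2]. cbn [opt ogsum]. unfold sum_opt; simpl. split.
 - intros [[H1 ->] | [-> H2]].
   + apply Hf in H1. destruct H1 as [x [Hx <-]]. exists (x,d). simpl. auto.
   + apply Hg in H2. destruct H2 as [x [Hx <-]]. exists (c,x). simpl. auto.
 - intros [[x1 x2] [H E]]. simpl in *. injection E as <- <-. destruct H as [[H1 ->]|[-> H2]].
   + left. split; auto. apply Hf; eauto.
   + right. split; auto. apply Hg; eauto.
Qed.

Theorem mainTheorem20 (C D : optiongraph) :
  isomorphic (quotient (ogsum C D) (bowtie (ogsum C D)))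
    (let E := ogsum (quotient C (bowtie C)) (quotient D (bowtie D)) in
     quotient E (bowtie E)).
Proof.
  cbv zeta. rewrite !bowtie_bis.
  apply (iso_quot (ogsum C D) (ogsum (quotient C (bis C)) (quotient D (bis D)))
           (fun x => (mk C (fst x), mk D (snd x)))).
  - apply prod_op; apply pi.
  - intros [a b]. destruct (mk_surj C a) as [c ->], (mk_surj D b) as [d ->]. exists (c,d); reflexivity.
Qed.
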